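(* Fix a constant $\Delta$. There is no LCL problem on trees of maximum degree at most $\Delta$ with mending radius between $\omega(1)$ and $o(\log n)$: if such an LCL problem $\Pi$ is $T$-mendable for some function $T$ with $T(n)=o(\log n)$, then $\Pi$ is $T'$-mendable for some constant function $T'$.
   Context: A locally verifiable problem $\Pi$ on a graph family $\mathcal{G}$ is given by a set $\Sigma$ of input labels, a set $\Gamma$ of output labels and a verifier $\psi$ with verification radius $r$: $\psi(G,\lambda,v)\in\{\text{happy},\text{unhappy}\}$ depends only on the radius-$r$ neighborhood of $v$ (structure, inputs and outputs, up to isomorphism); $\lambda:V\to\Gamma$ is a solution if $\psi$ is happy everywhere. $\Pi$ is an LCL problem if $\Sigma,\Gamma$ are finite and all graphs in $\mathcal{G}$ have maximum degree bounded by a constant. Partial labelings are maps $\lambda:V\to\Gamma\cup\{\bot\}$; the relaxed verifier $\psi^*$ is happy at $v$ if some node within distance $r$ of $v$ has label $\bot$, and otherwise $\psi^*(G,\lambda,v)=\psi(G,\lambda',v)$ for any $\lambda':V\to\Gamma$ agreeing with $\lambda$ on the radius-$r$ neighborhood of $v$; $\psi^*$ accepts $\lambda$ if happy everywhere. Given $\lambda$ accepted by $\psi^*$ and node $v$, a $t$-mend of $\lambda$ at $v$ is a partial labeling $\mu$ accepted by $\psi^*$ with $\mu(v)\neq\bot$, $\mu(u)=\bot\Rightarrow\lambda(u)=\bot$, and $\mu(u)\neq\lambda(u)\Rightarrow\mathrm{dist}(u,v)\le t$. A verifier is $T$-mendable if for every $G\in\mathcal{G}$ with $n$ nodes, every $\lambda$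 accepted by $\psi^*$ and every node $v$, a $T(n)$-mend at $v$ exists; $\Pi$ is $T$-mendable if some radius-$r$ verifier for $\Pi$ (accepting exactly the solutions of $\Pi$) is $T$-mendable. *)

(* Defs.v *)
From Stdlib Require Import Rdefinitions Raxioms RIneq Rpower.
From mathcomp Require Import all_boot.

Set Implicit Arguments.
Unset Strict Implicit.
Unset Printing Implicit Defensive.

Fixpoint ball (V : finType) (e : rel V) (k : nat) (v : V) : {set V} :=
  match k with
  | 0 => [set v]
  | k'.+1 => ball e k' v :|: [set u | [exists w in ball e k' v, e w u]]
  end.

Definition simple_graph (V : finType) (e : rel V) : Prop :=
  symmetric e /\ irreflexive e.

Definition connected (V : finType) (e : rel V) : Prop :=
  forall x y : V, connect e x y.

Definition acyclic (V : finType) (e : rel V) : Prop :=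
  forall c : seq V, uniq c -> 3 <= size c -> ~~ cycle e c.

Definition is_tree (V : finType) (e : rel V) : Prop :=
  simple_graph e /\ connected e /\ acyclic e.

Definition max_degree_le (V : finType) (e : rel V) (Delta : nat) : Prop :=
  forall v : V, #|[set u | e v u]| <= Delta.

Definition in_family (Delta : nat) (V : finType) (e : rel V) : Prop :=
  is_tree e /\ max_degree_le e Delta.

(* psi V e inp out v = true  means  "v is happy" *)
Definition verifier (Sigma Gamma : Type) : Type :=
  forall V : finType, rel V -> (V -> Sigma) -> (V -> Gamma) -> V -> bool.

Definition ball_iso (Sigma Gamma : Type) (r : nat)
  (V : finType) (e : rel V) (inp : V -> Sigma) (out : V -> Gamma) (v : V)
  (V' : finType) (e' : rel V') (inp' : V' -> Sigma) (out' : V' -> Gamma) (v' : V')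
  (f : V -> V') : Prop :=
  [/\ f v = v',
      {in ball e r v &, injective f},
      f @: ball e r v = ball e' r v',
      {in ball e r v &, forall x y, e' (f x) (f y) = e x y}
    & {in ball e r v, forall x, inp' (f x) = inp x /\ out' (f x) = out x}].

Definition local_verifier (Delta : nat) (Sigma Gamma : Type) (r : nat)
  (psi : verifier Sigma Gamma) : Prop :=
  forall (V : finType) (e : rel V) (inp : V -> Sigma) (out : V -> Gamma) (v : V)
         (V' : finType) (e' : rel V') (inp' : V' -> Sigma) (out' : V' -> Gamma) (v' : V')
         (f : V -> V'),
    in_family Delta e -> in_family Delta e' ->
    ball_iso r e inp out v e' inp' out' v' f ->
    psi V e inp out v = psi V' e' inp' out' v'.

Definition same_solutions (Delta : nat) (Sigma Gamma : Type)
  (psi psi' : verifier Sigma Gamma) : Prop :=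
  forall (V : finType) (e : rel V) (inp : V -> Sigma) (out : V -> Gamma),
    in_family Delta e ->
    ((forall v, psi V e inp out v) <-> (forall v, psi' V e inp out v)).

(* partial labeling: None stands for bot *)
Definition relaxed_happy (Sigma Gamma : Type) (r : nat) (psi : verifier Sigma Gamma)
  (V : finType) (e : rel V) (inp : V -> Sigma) (lam : V -> option Gamma) (v : V) : Prop :=
  (exists2 u, u \in ball e r v & lam u = None) \/
  (forall lam' : V -> Gamma,
     (forall u, u \in ball e r v -> lam u = Some (lam' u)) -> psi V e inp lam' v).

Definition relaxed_accepts (Sigma Gamma : Type) (r : nat) (psi : verifier Sigma Gamma)
  (V : finType) (e : rel V) (inp : V -> Sigma) (lam : V -> option Gamma) : Prop :=
  forall v, relaxed_happy r psi e inp lam v.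

Definition is_mend (Sigma Gamma : Type) (r : nat) (psi : verifier Sigma Gamma)
  (V : finType) (e : rel V) (inp : V -> Sigma) (lam mu : V -> option Gamma)
  (v : V) (t : nat) : Prop :=
  [/\ relaxed_accepts r psi e inp mu,
      mu v <> None,
      (forall u, mu u = None -> lam u = None)
    & (forall u, mu u <> lam u -> u \in ball e t v)].

Definition verifier_mendable (Delta : nat) (Sigma Gamma : Type) (r : nat)
  (psi : verifier Sigma Gamma) (T : nat -> nat) : Prop :=
  forall (V : finType) (e : rel V) (inp : V -> Sigma) (lam : V -> option Gamma) (v : V),
    in_family Delta e ->
    relaxed_accepts r psi e inp lam ->
    exists mu, is_mend r psi e inp lam mu v (T #|V|).

Definition problem_mendable (Delta : nat) (Sigma Gamma : Type) (r : nat)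
  (psi : verifier Sigma Gamma) (T : nat -> nat) : Prop :=
  exists psi' : verifier Sigma Gamma,
    [/\ local_verifier Delta r psi', same_solutions Delta psi psi'
      & verifier_mendable Delta r psi' T].

Definition little_o_log (T : nat -> nat) : Prop :=
  forall eps : R, Rlt R0 eps ->
    exists N : nat, forall n : nat, N <= n ->
      Rle (INR (T n)) (Rmult eps (ln (INR n))).

(* Main.v *)
Require Import Defs.
From mathcomp Require Import all_boot.
From Stdlib Require Import Rdefinitions Raxioms RIneq Rpower Lra.
Set Implicit Arguments. Unset Strict Implicit. Unset Printing Implicit Defensive.

Lemma ballS_mem (V : finType) (e : rel V) k v u :
  (u \in ball e k.+1 v) = (u \in ball e k v) || [exists w in ball e k v, e w u].
Proof. by rewrite /= in_setU in_set. Qed.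

Lemma ball_center (V : finType) (e : rel V) k v : v \in ball e k v.
Proof. elim: k => [|k IH]; first by rewrite /= in_set1. by rewrite ballS_mem IH. Qed.

Lemma ball_step (V : finType) (e : rel V) k v u w :
  u \in ball e k v -> e u w -> w \in ball e k.+1 v.
Proof. move=> Hu Huw; rewrite ballS_mem; apply/orP; right; apply/existsP; exists u; by rewrite Hu. Qed.

Lemma ball_mono1 (V : finType) (e : rel V) k v : ball e k v \subset ball e k.+1 v.
Proof. by apply/subsetP => u Hu; rewrite ballS_mem Hu. Qed.

Lemma ball_mono (V : finType) (e : rel V) k m v : k <= m -> ball e k v \subset ball e m v.
Proof.
move=> /subnK <-; elim: (m - k) => [|d IH]; first by rewrite add0n.
by apply: subset_trans IH _; rewrite addSn; apply: ball_mono1.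
Qed.

Lemma ball_trans (V : finType) (e : rel V) k m v u w :
  u \in ball e k v -> w \in ball e m u -> w \in ball e (k + m) v.
Proof.
move=> Hu; elim: m w => [|m IH] w.
  by rewrite /= in_set1 addn0 => /eqP ->.
rewrite ballS_mem => /orP[Hw|/existsP[x /andP[Hx Hxw]]].
  by rewrite addnS; apply: (subsetP (ball_mono1 e (k + m) v)); apply: IH.
by rewrite addnS; apply: ball_step (IH _ Hx) Hxw.
Qed.

Lemma ball_sym (V : finType) (e : rel V) k v u :
  symmetric e -> u \in ball e k v -> v \in ball e k u.
Proof.
move=> se; elim: k u => [|k IH] u.
  by rewrite /= !in_set1 eq_sym.
rewrite ballS_mem => /orP[Hu|/existsP[x /andP[Hx Hxu]]].
  by apply: (subsetP (ball_mono1 e k u)); apply: IH.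
have H1 : x \in ball e 1 u by apply: (ball_step (ball_center _ 0 u)); rewrite se.
by rewrite -add1n; apply: ball_trans H1 (IH _ Hx).
Qed.

Lemma card_bigcup_le (I T : finType) (A : {set I}) (F : I -> {set T}) :
  #|\bigcup_(i in A) F i| <= \sum_(i in A) #|F i|.
Proof.
elim/big_rec2: _ => [|i S n _ H]; first by rewrite cards0.
apply: leq_trans (leq_card_setU _ _).1 _.
exact: leq_add.
Qed.

Lemma ball_card (V : finType) (e : rel V) Delta k v :
  max_degree_le e Delta -> #|ball e k v| <= expn Delta.+1 k.
Proof.
move=> md; elim: k => [|k IH]; first by rewrite /= cards1.
rewrite /= expnS mulSn.
apply: leq_trans (leq_card_setU _ _).1 _.
apply: leq_add; first exact: IH.
have -> : [set u | [exists w in ball e k v, e w u]] = \bigcup_(w in ball e k v) [set u | e w u].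
  apply/setP => u; rewrite in_set; apply/existsP/bigcupP => [[w /andP[Hw Hwu]]|[w Hw Hwu]].
    by exists w; rewrite ?in_set.
  by exists w; rewrite Hw -(in_set (fun u => e w u)).
apply: leq_trans (card_bigcup_le _ _) _.
apply: leq_trans (_ : \sum_(i in ball e k v) Delta <= _).
  by apply: leq_sum => i _; apply: md.
rewrite sum_nat_const mulnC; exact: leq_mul.
Qed.

Definition hrel (V : finType) (e : rel V) (B : {set V}) : rel {x : V | x \in B} :=
  fun x y => e (val x) (val y).
Arguments hrel {V} e B x y.

Lemma sub_ball_mem (V : finType) (e : rel V) (B : {set V}) k (x : {x : V | x \in B}) :
  ball e k (val x) \subset B ->
  forall y, (y \in ball (hrel e B) k x) = (val y \in ball e k (val x)).
Proof.
elim: k => [|k IH] sB y.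
  by rewrite /= !in_set1; apply/eqP/eqP => [->|/val_inj].
have sB' : ball e k (val x) \subset B by apply: subset_trans (ball_mono1 _ _ _) sB.
rewrite !ballS_mem IH //; congr (_ || _).
apply/existsP/existsP => [[w /andP[Hw Hwy]]|[w /andP[Hw Hwy]]].
  by exists (val w); rewrite -IH // Hw.
have wB : w \in B by apply: (subsetP sB').
exists (Sub w wB); rewrite IH //= Hw /=; exact: Hwy.
Qed.

Lemma sub_ball_imset (V : finType) (e : rel V) (B : {set V}) k (x : {x : V | x \in B}) :
  ball e k (val x) \subset B ->
  val @: ball (hrel e B) k x = ball e k (val x).
Proof.
move=> sB; apply/setP => z; apply/imsetP/idP => [[y Hy ->]|Hz].
  by rewrite -sub_ball_mem.
have zB : z \in B by apply: (subsetP sB).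
by exists (Sub z zB) => //; rewrite sub_ball_mem.
Qed.

Lemma sub_family (V : finType) (e : rel V) Delta R v :
  in_family Delta e -> in_family Delta (hrel e (ball e R v)).
Proof.
move=> [[[se ie] [ce ace]] md].
set B := ball e R v.
have vB : v \in B by apply: ball_center.
pose vH : {x : V | x \in B} := Sub v vB.
have sH : symmetric (hrel e B) by move=> x y; rewrite /hrel se.
split; [split; [split|split]|].
- exact: sH.
- by move=> x; rewrite /hrel ie.
- have H1 : forall k, k <= R -> forall y : {x : V | x \in B}, val y \in ball e k v -> connect (hrel e B) vH y.
    elim=> [|k IH] kR y.
      by rewrite /= in_set1 => /eqP Hy; have -> : y = vH by apply: val_inj.
    rewrite ballS_mem => /orP[Hy|/existsP[w /andP[Hw Hwy]]].
      by apply: IH => //; apply: ltnW.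
    have wB : w \in B by apply: (subsetP (ball_mono e v (ltnW kR))).
    apply: connect_trans (IH (ltnW kR) (Sub w wB) Hw) (connect1 _).
    exact: Hwy.
  have H2 : forall y, connect (hrel e B) vH y by move=> y; apply: (H1 R) => //; exact: valP y.
  move=> x y; apply: connect_trans (H2 y).
  by rewrite (sym_connect_sym sH); apply: H2.
- move=> c uc sc.
  have := ace (map val c); rewrite cycle_map; apply.
    by rewrite map_inj_uniq //; apply: val_inj.
  by rewrite size_map.
- move=> x; apply: leq_trans (md (val x)).
  rewrite -(card_imset _ val_inj); apply: subset_leq_card.
  by apply/subsetP => z /imsetP[y]; rewrite !in_set => Hy ->.
Qed.

Lemma happy_ext (Sigma Gamma : Type) r (psi : verifier Sigma Gamma)
  (V : finType) (e : rel V) inp (lam1 lam2 : V -> option Gamma) w :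
  {in ball e r w, forall u, lam1 u = lam2 u} ->
  relaxed_happy r psi e inp lam1 w -> relaxed_happy r psi e inp lam2 w.
Proof.
move=> E [[u Hu Hn]|H].
  by left; exists u => //; rewrite -E.
by right => l Hl; apply: H => u Hu; rewrite E //; apply: Hl.
Qed.

Lemma happy_iso (Delta : nat) (Sigma Gamma : Type) r (psi : verifier Sigma Gamma)
  (V : finType) (e : rel V) (inp : V -> Sigma) (lam : V -> option Gamma) (w : V)
  (V' : finType) (e' : rel V') (inp' : V' -> Sigma) (lam' : V' -> option Gamma) (w' : V')
  (f : V -> V') :
  local_verifier Delta r psi -> in_family Delta e -> in_family Delta e' ->
  f w = w' -> {in ball e r w &, injective f} -> f @: ball e r w = ball e' r w' ->
  {in ball e r w &, forall x y, e' (f x) (f y) = e x y} ->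
  {in ball e r w, forall x, inp' (f x) = inp x} ->
  {in ball e r w, forall x, lam' (f x) = lam x} ->
  (relaxed_happy r psi e inp lam w <-> relaxed_happy r psi e' inp' lam' w').
Proof.
move=> lv fe fe' fw finj fim fed finp flam; split.
- move=> [[u Hu Hn]|H].
    left; exists (f u); first by rewrite -fim; apply: imset_f.
    by rewrite flam.
  right => l' Hl'.
  have Hl : forall u, u \in ball e r w -> lam u = Some (l' (f u)).
    move=> u Hu; rewrite -flam //; apply: Hl'; rewrite -fim; exact: imset_f.
  have := H _ Hl.
  rewrite (@lv V e inp (fun u => l' (f u)) w V' e' inp' l' w' f) //.
  by split => // x Hx; rewrite finp.
- move=> [[u' Hu' Hn]|H].
    left; move: Hu'; rewrite -fim => /imsetP[u Hu Eu]; exists u => //.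
    by rewrite -flam // -Eu.
  right => l Hl.
  pose l' (y : V') := if [pick x in ball e r w | f x == y] is Some x then l x else l w.
  have El : forall x, x \in ball e r w -> l' (f x) = l x.
    move=> x Hx; rewrite /l'; case: pickP => [x' /andP[Hx' /eqP E]|/(_ x)].
      by rewrite (finj _ _ Hx' Hx E).
    by rewrite Hx eqxx.
  have Hl' : forall u, u \in ball e' r w' -> lam' u = Some (l' u).
    move=> u; rewrite -fim => /imsetP[x Hx ->]; rewrite flam // El //; exact: Hl.
  have := H _ Hl'.
  rewrite -(@lv V e inp l w V' e' inp' l' w' f) //.
  by split => // x Hx; rewrite finp // El.
Qed.

Lemma INR_addn m n : INR (m + n) = Rplus (INR m) (INR n).
Proof. by rewrite -plus_INR. Qed.

Lemma ln_le' (x y : R) : Rlt 0%R x -> Rle x y -> Rle (ln x) (ln y).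
Proof.
move=> x0 [xy|->]; last exact: Rle_refl.
by apply: Rlt_le; apply: ln_increasing.
Qed.

Lemma expn_pow m n : expn m n = Nat.pow m n.
Proof. elim: n => // n IH; rewrite expnS IH; by []. Qed.

Lemma choose_c (Delta r : nat) (T : nat -> nat) : little_o_log T ->
  exists c, 3 * r <= c /\ forall n, 0 < n -> n <= expn Delta.+1 (c + 3 * r) -> T n <= c.
Proof.
move=> lo.
pose L := ln (INR Delta.+1).
have L0 : Rle 0%R L.
  rewrite /L -ln_1; apply: ln_le'; first lra.
  by apply: (le_INR 1); apply/leP.
pose eps := Rinv (Rmult 2 (Rplus L 1)).
have eps0 : Rlt 0%R eps by apply: Rinv_0_lt_compat; lra.
have [N0 HN] := lo eps eps0.
exists (maxn (\max_(i < N0) T i) (3 * r)); split; first exact: leq_maxr.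
set c := maxn _ _ => n n0 nle.
case: (ltnP n N0) => [nN|Nn].
  apply: leq_trans (leq_maxl _ (3 * r)).
  exact: (@leq_bigmax _ (fun i : 'I_N0 => T i) (Ordinal nN)).
have H1 := HN n Nn.
have n0R : Rlt 0%R (INR n) by apply: (lt_INR 0); apply/ltP.
have H2 : Rle (ln (INR n)) (Rmult (INR (c + 3 * r)) L).
  rewrite /L -ln_pow; last by apply: (lt_INR 0); apply/ltP.
  rewrite -pow_INR; apply: ln_le' => //; apply: le_INR; apply/leP; by rewrite -expn_pow.
have H3 : Rle (INR (3 * r)) (INR c) by apply: le_INR; apply/leP; exact: leq_maxr.
rewrite INR_addn in H2.
have H4 : Rle (INR (T n)) (INR c).
  apply: Rle_trans H1 _.
  have E : Rmult eps (Rmult (Rplus (INR c) (INR (3 * r))) L) =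
           Rmult (Rplus (INR c) (INR (3 * r))) (Rmult L eps) by ring.
  have Le : Rle (Rmult L eps) (Rinv 2).
    rewrite /eps Rinv_mult.
    have : Rlt 0%R (Rplus L 1) by lra.
    move=> HL1.
    have : Rle (Rmult L (Rinv (Rplus L 1))) 1.
      apply: (Rmult_le_reg_r (Rplus L 1)) => //.
      rewrite Rmult_assoc Rinv_l; lra.
    have : Rle 0%R (Rmult L (Rinv (Rplus L 1))).
      apply: Rmult_le_pos => //; apply: Rlt_le; exact: Rinv_0_lt_compat.
    move=> A B; have := Rinv_0_lt_compat 2 ltac:(lra); move=> C.
    replace (Rmult L (Rmult (Rinv 2) (Rinv (Rplus L 1)))) with (Rmult (Rinv 2) (Rmult L (Rinv (Rplus L 1)))) by ring.
    rewrite -{2}(Rmult_1_r (Rinv 2)); apply: Rmult_le_compat_l; lra.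
  apply: Rle_trans (Rmult_le_compat_l eps _ _ (Rlt_le _ _ eps0) H2) _.
  rewrite E.
  have P0 : Rle 0%R (Rplus (INR c) (INR (3 * r))) by apply: Rplus_le_le_0_compat; apply: pos_INR.
  apply: Rle_trans (Rmult_le_compat_l _ _ _ P0 Le) _.
  lra.
by apply/leP; apply: INR_le.
Qed.

Theorem corollary8p4 (Delta : nat) (Sigma Gamma : finType) (r : nat)
  (psi : verifier Sigma Gamma) (T : nat -> nat) :
  local_verifier Delta r psi ->
  little_o_log T ->
  problem_mendable Delta r psi T ->
  exists c : nat, problem_mendable Delta r psi (fun _ => c).
Proof.
move=> lv lo [psi' [lv' ss mend]].
have [c [c3r Tc]] := choose_c Delta r lo.
exists c; exists psi'; split => //.
move=> V e inp lam v fam acc.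
have se : symmetric e by case: fam => [[[]]].
have E1 : c + 2 * r + r = c + 3 * r by rewrite -addnA -mulSnr.
have E2 : c + r + r = c + 2 * r by rewrite -addnA addnn -mul2n.
pose B := ball e (c + 3 * r) v.
have vB : v \in B by apply: ball_center.
pose vH : {x : V | x \in B} := Sub v vB.
pose eH := hrel e B.
pose inpH := fun y : {x : V | x \in B} => inp (val y).
pose lamH := fun y : {x : V | x \in B} =>
  if val y \in ball e (c + 2 * r) v then lam (val y) else None.
have famH : in_family Delta eH by apply: sub_family.
have R1B : ball e (c + 2 * r) v \subset B by apply: ball_mono; rewrite leq_add2l leq_mul2r orbT.
have cR1 : ball e c v \subset ball e (c + 2 * r) v by apply: ball_mono; apply: leq_addr.
have accH : relaxed_accepts r psi' eH inpH lamH.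
  move=> wH.
  case: (boolP [exists y in ball eH r wH, val y \notin ball e (c + 2 * r) v]).
    move=> /existsP[y /andP[Hy Hn]]; left; exists y => //.
    by rewrite /lamH (negbTE Hn).
  move=> /existsPn Hall.
  have Hall' : forall y, y \in ball eH r wH -> val y \in ball e (c + 2 * r) v.
    by move=> y Hy; move: (Hall y); rewrite Hy /= negbK.
  have wR1 := Hall' wH (ball_center _ _ _).
  have sB : ball e r (val wH) \subset B.
    apply/subsetP => z Hz; rewrite /B -E1; exact: ball_trans wR1 Hz.
  apply: (iffRL (@happy_iso Delta Sigma Gamma r psi' _ eH inpH lamH wH V e inp lam (val wH) val lv' famH fam erefl _ _ _ _ _)); last exact: acc.
  - by move=> x y _ _; apply: val_inj.
  - exact: sub_ball_imset.
  - by [].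
  - by [].
  - by move=> y Hy; rewrite /lamH Hall'.
have [muH [accmu muv muN muD]] := mend _ eH inpH lamH vH famH accH.
set t := T _ in muD.
have tc : t <= c.
  rewrite /t card_sig; apply: Tc.
    by apply/card_gt0P; exists v; rewrite inE.
  apply: leq_trans (ball_card (c + 3 * r) v fam.2).
  by apply: subset_leq_card; apply/subsetP => x; rewrite inE.
have tB : ball e t (val vH) \subset B.
  by apply: ball_mono; apply: leq_trans tc _; apply: leq_addr.
have tcB : ball e t v \subset ball e c v by apply: ball_mono.
pose muG := fun x => if x \in ball e c v then muH (insubd vH x) else lam x.
exists muG; split.
- move=> w.
  case: (boolP [exists u in ball e r w, u \in ball e c v]).
    move=> /existsP[u /andP[Hu Huc]].
    have wc : w \in ball e (c + r) v := ball_trans Huc (ball_sym se Hu).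
    have sR1 : ball e r w \subset ball e (c + 2 * r) v.
      by apply/subsetP => z Hz; rewrite -E2; exact: ball_trans wc Hz.
    have wB : w \in B.
      apply: (subsetP R1B); apply: (subsetP sR1); exact: ball_center.
    pose wH := insubd vH w.
    have EwH : val wH = w by apply: insubdK.
    have sB : ball e r (val wH) \subset B by rewrite EwH; apply: subset_trans sR1 R1B.
    apply: (iffLR (@happy_iso Delta Sigma Gamma r psi' _ eH inpH muH wH V e inp muG w val lv' famH fam EwH _ _ _ _ _)); last exact: accmu.
    + by move=> x y _ _; apply: val_inj.
    + by rewrite -EwH; apply: sub_ball_imset.
    + by [].
    + by [].
    + move=> y Hy.
      have yin : val y \in ball e r w by rewrite -EwH -sub_ball_mem.
      rewrite /muG; case: ifP => Hyc; first by rewrite valKd.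
      have -> : muH y = lamH y.
        apply/eqP; apply/negPn/negP => /eqP Hne.
        have := muD y Hne; rewrite sub_ball_mem // => Hyt.
        by rewrite (subsetP tcB _ Hyt) in Hyc.
      by rewrite /lamH (subsetP sR1 _ yin).
  move=> /existsPn Hall.
  apply: happy_ext _ (acc w) => u Hu.
  by rewrite /muG; move: (Hall u); rewrite Hu /= => /negbTE ->.
- rewrite /muG ball_center.
  have -> : insubd vH v = vH by apply: val_inj; rewrite insubdK.
  exact: muv.
- move=> u; rewrite /muG; case: ifP => Huc // /muN.
  have uB : u \in B by apply: (subsetP R1B); apply: (subsetP cR1).
  by rewrite /lamH insubdK // (subsetP cR1 _ Huc).
- by move=> u; rewrite /muG; case: ifP.
Qed.
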